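(* Let $\mathbf X=\{X_n\}$, $\mathbf Z=\{Z_n\}$ be general sources with given couplings $P_{Z_n|X_n}$, and let $\mathbf W=\{W_{Y_n|X_n}\}$ be a general channel. Suppose that for every $\gamma\in\mathbb R$, $$\lim_{n\to\infty}\mathbb E_{P_{X_n}}\Big[\mu\big(\{\delta\in[0,1): c_n^{z|x}(\delta,X_n)-c_n^{w}(\delta,X_n)<\gamma\}\big)\Big]=0 .$$ Then $\mathbf Z$ is an approximating source for $\mathbf W$ given $\mathbf X$.
   Context: Logarithms are natural. For each $n$, $X_n$ and $Z_n$ are jointly distributed random variables on countable sets $\mathcal X_n$, $\mathcal Z_n$, with joint law determined by the pmf $P_{X_n}$ and a conditional pmf $P_{Z_n|X_n}$. The channel $W_{Y_n|X_n}(\cdot|x)$ is a pmf on a countable set $\mathcal Y_n$ for each $x\in\mathcal X_n$. For a random variable $Z$ on a countable set $\mathcal Z$ with pmf $P_Z$, list the elements of positive probability as $z_1,z_2,\dots$ (a finite or countably infinite list) with $P_Z(z_1)\ge P_Z(z_2)\ge\cdots$ (ties broken arbitrarily). Set $\delta_0=0$ and $\delta_k=\sum_{i\le k}P_Z(z_i)$. For $\delta\in[0,1)$ define $c^z(\delta)=\log\frac{1}{P_Z(z_k)}$, where $k$ is the unique index with $\delta\in[\delta_{k-1},\delta_k)$. For $x\in\mathcal X_n$, $c_n^{z|x}(\cdot,x)$ is this function for the pmf $P_{Z_n|X_n}(\cdot|x)$, and $c_n^{w}(\cdot,x)$ is this function for the pmf $W_{Y_n|X_n}(\cdot|x)$.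 $\mu$ is Lebesgue measure. The variational distance is $d(P,Q)=\sum_a|P(a)-Q(a)|$. $\mathbf Z$ is an approximating source for $\mathbf W$ given $\mathbf X$ if there exist deterministic maps $\varphi_n:\mathcal X_n\times\mathcal Z_n\to\mathcal Y_n$ such that $$\lim_{n\to\infty}d\big(P_{X_nY_n},P_{X_n,\varphi_n(X_n,Z_n)}\big)=0,$$ where $P_{X_nY_n}(x,y)=P_{X_n}(x)W_{Y_n|X_n}(y|x)$. *)

(* Defs.v *)
From Stdlib Require Import Reals Lra Lia Classical ClassicalEpsilon.
Open Scope R_scope.

(* All countable alphabets are encoded as subsets of nat (pmfs on nat
   vanishing off the alphabet). *)

Fixpoint psum (f : nat -> R) (n : nat) : R :=
  match n with O => 0 | S m => psum f m + f m end.

Definition is_pmf (p : nat -> R) : Prop :=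
  (forall a, 0 <= p a) /\ infinite_sum p 1.

(* Sum of a nonnegative series over nat: supremum of partial sums
   (used only for nonnegative, bounded series). *)
Definition sumR (f : nat -> R) : R :=
  epsilon (inhabits 0) (fun l => is_lub (fun s => exists N, s = psum f N) l).

Definition sum2R (f : nat -> nat -> R) : R :=
  epsilon (inhabits 0)
    (fun l => is_lub (fun s => exists N, s = psum (fun a => psum (f a) N) N) l).

Definition var_dist (P Q : nat -> nat -> R) : R :=
  sum2R (fun a b => Rabs (P a b - Q a b)).

(* Lebesgue (outer) measure of a subset of R: infimum of total lengths of
   countable covers by intervals [a_i, b_i]. (Only applied to subsets of
   [0,1), which are Lebesgue measurable here, so it is Lebesgue measure.) *)
Definition cover_lengths (A : R -> Prop) (s : R) : Prop :=
  exists a b : nat -> R,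
    (forall i, a i <= b i) /\
    (forall t, A t -> exists i, a i <= t <= b i) /\
    infinite_sum (fun i => b i - a i) s.

Definition leb_measure (A : R -> Prop) : R :=
  - epsilon (inhabits 0) (fun l => is_lub (fun s => cover_lengths A (- s)) l).

(* Encoded as
   e : nat -> option nat, with None marking the end of a finite list. *)
Definition sorted_listing (p : nat -> R) (e : nat -> option nat) : Prop :=
  (forall k, e k = None -> e (S k) = None) /\
  (forall k z, e k = Some z -> 0 < p z) /\
  (forall k l z, e k = Some z -> e l = Some z -> k = l) /\
  (forall z, 0 < p z -> exists k, e k = Some z) /\
  (forall k z z', e k = Some z -> e (S k) = Some z' -> p z' <= p z).

Definition listing_mass (p : nat -> R) (e : nat -> option nat) (k : nat) : R :=
  match e k with Some z => p z | None => 0 end.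

(* c^z(delta) = log (1 / P_Z(z_k)) where delta_{k-1} <= delta < delta_k,
   delta_k = sum_{i<=k} P_Z(z_i).  (Independent of tie-breaking.)
   Here indices are 0-based: delta in [psum k, psum (k+1)). *)
Definition cfun (p : nat -> R) (delta : R) : R :=
  epsilon (inhabits 0) (fun c =>
    exists e, sorted_listing p e /\
    exists k z, e k = Some z /\
      psum (listing_mass p e) k <= delta < psum (listing_mass p e) (S k) /\
      c = ln (/ p z)).

Definition approximating_source
  (PX : nat -> nat -> R) (PZgX : nat -> nat -> nat -> R)
  (W : nat -> nat -> nat -> R) : Prop :=
  exists phi : nat -> nat -> nat -> nat,
    Un_cv (fun n =>
      var_dist (fun x y => PX n x * W n x y)
               (fun x y => PX n x *
                  sumR (fun z => if Nat.eqb (phi n x z) y then PZgX n x z else 0)))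
      0.

(* Main.v *)
Require Import Defs.
From Stdlib Require Import Reals Lra Lia List Permutation Classical ClassicalEpsilon Rtopology FunctionalExtensionality.
Import ListNotations.
Open Scope R_scope.

Fixpoint lsum (f : nat -> R) (l : list nat) : R :=
  match l with [] => 0 | a :: l' => f a + lsum f l' end.

Lemma lsum_app f l1 l2 : lsum f (l1 ++ l2) = lsum f l1 + lsum f l2.
Proof. induction l1; simpl; [lra| rewrite IHl1; lra]. Qed.

Lemma lsum_perm f l1 l2 : Permutation l1 l2 -> lsum f l1 = lsum f l2.
Proof. induction 1; simpl; lra. Qed.

Lemma lsum_nonneg f l : (forall a, 0 <= f a) -> 0 <= lsum f l.
Proof. intros H; induction l; simpl; [lra| specialize (H a); lra]. Qed.

Lemma lsum_incl f l1 l2 : (forall a, 0 <= f a) -> NoDup l1 -> incl l1 l2 ->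
  lsum f l1 <= lsum f l2.
Proof.
  intros Hf; revert l2; induction l1 as [|a l1 IH]; intros l2 Hn Hi.
  - simpl; apply lsum_nonneg; auto.
  - inversion Hn; subst.
    assert (Ha : In a l2) by (apply Hi; left; auto).
    destruct (in_split _ _ Ha) as [A [B ->]].
    rewrite (lsum_perm f (A ++ a :: B) (a :: (A ++ B))) by (symmetry; apply Permutation_middle).
    simpl. assert (lsum f l1 <= lsum f (A ++ B)); [|lra].
    apply IH; auto. intros x Hx. assert (Hx2 : In x (A ++ a :: B)) by (apply Hi; right; auto).
    apply in_app_or in Hx2; apply in_or_app; destruct Hx2 as [?|[?|?]]; auto.
    subst; contradiction.
Qed.

Lemma lsum_map f g l : lsum f (map g l) = lsum (fun a => f (g a)) l.
Proof. induction l; simpl; congruence. Qed.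

Lemma lsum_ext f g l : (forall a, In a l -> f a = g a) -> lsum f l = lsum g l.
Proof. induction l; simpl; intros H; auto. rewrite H by (left; auto). rewrite IHl; auto. Qed.

Lemma lsum_le f g l : (forall a, In a l -> f a <= g a) -> lsum f l <= lsum g l.
Proof. induction l; simpl; intros H; [lra|]. pose proof (H a (or_introl eq_refl)).
  assert (lsum f l <= lsum g l) by (apply IHl; intros; apply H; auto). lra. Qed.

Lemma lsum_plus f g l : lsum (fun a => f a + g a) l = lsum f l + lsum g l.
Proof. induction l; simpl; lra. Qed.

Lemma lsum_scal c f l : lsum (fun a => c * f a) l = c * lsum f l.
Proof. induction l; simpl; [ring|rewrite IHl; ring]. Qed.


Lemma psum_seq f n : psum f n = lsum f (seq 0 n).
Proof.
  induction n; [reflexivity|]. cbn [psum]. rewrite seq_S, lsum_app, IHn. simpl. lra.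
Qed.

Lemma psum_nonneg f n : (forall a, 0 <= f a) -> 0 <= psum f n.
Proof. intros; rewrite psum_seq; apply lsum_nonneg; auto. Qed.

Lemma psum_mono f m n : (forall a, 0 <= f a) -> (m <= n)%nat -> psum f m <= psum f n.
Proof. intros Hf H; induction H; simpl; auto; [lra|]. specialize (Hf m0); lra. Qed.

Lemma psum_sum_f f n : psum f (S n) = sum_f_R0 f n.
Proof. induction n; simpl; [lra|]. simpl in IHn. rewrite <- IHn. simpl. lra. Qed.

Lemma pmf_psum_le (p : nat -> R) n : is_pmf p -> psum p n <= 1.
Proof.
  intros [Hp Hs]. destruct (Rle_dec (psum p n) 1) as [?|Hn]; auto. exfalso.
  destruct (Hs (psum p n - 1)) as [N HN]; [lra|].
  specialize (HN (max N n) (Nat.le_max_l _ _)).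
  assert (psum p n <= psum p (S (max N n))) by (apply psum_mono; auto; lia).
  rewrite psum_sum_f in H. unfold Rdist in HN. apply Rabs_def2 in HN. lra.
Qed.

Lemma pmf_psum_big (p : nat -> R) eps : is_pmf p -> eps > 0 -> exists N, psum p N > 1 - eps.
Proof.
  intros [Hp Hs] He. destruct (Hs eps He) as [N HN]. exists (S N).
  specialize (HN N (le_n _)). rewrite psum_sum_f. unfold Rdist in HN. apply Rabs_def2 in HN. lra.
Qed.

Lemma pmf_le1 (p : nat -> R) a : is_pmf p -> p a <= 1.
Proof.
  intros Hp. pose proof (pmf_psum_le p (S a) Hp).
  assert (psum p a >= 0) by (apply Rle_ge, psum_nonneg, Hp). simpl in H. lra.
Qed.

Lemma lub_spec (E : R -> Prop) (M : R) :
  (exists x, E x) -> (forall x, E x -> x <= M) ->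
  is_lub E (epsilon (inhabits 0) (fun l => is_lub E l)).
Proof.
  intros Hne Hb. apply epsilon_spec.
  destruct (completeness E) as [m Hm]; [exists M; exact Hb| exact Hne| eauto].
Qed.

Lemma sumR_lub f M : (forall N, psum f N <= M) ->
  is_lub (fun s => exists N, s = psum f N) (sumR f).
Proof.
  intros HM. unfold sumR. apply (lub_spec _ M).
  - exists (psum f 0); eauto.
  - intros x [N ->]; auto.
Qed.

Lemma sumR_ge f M N : (forall N, psum f N <= M) -> psum f N <= sumR f.
Proof. intros HM. destruct (sumR_lub f M HM) as [H _]. apply H; eauto. Qed.

Lemma sumR_le f B : (forall N, psum f N <= B) -> sumR f <= B.
Proof. intros HM. destruct (sumR_lub f B HM) as [_ H]. apply H. intros x [N ->]; auto. Qed.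

Lemma sumR_nonneg f M : (forall a, 0 <= f a) -> (forall N, psum f N <= M) -> 0 <= sumR f.
Proof. intros. apply Rle_trans with (psum f 0); [simpl; lra|]. eapply sumR_ge; eauto. Qed.

Lemma sumR_zero f : (forall a, f a = 0) -> sumR f = 0.
Proof.
  intros H. assert (Hp : forall N, psum f N = 0).
  { induction N; simpl; auto. rewrite IHN, H; lra. }
  apply Rle_antisym.
  - apply sumR_le. intros; rewrite Hp; lra.
  - apply sumR_nonneg with 0; intros; [rewrite H|rewrite Hp]; lra.
Qed.

Fixpoint somes (e : nat -> option nat) (k : nat) : list nat :=
  match k with O => [] | S k' => somes e k' ++ (match e k' with Some z => [z] | None => [] end) end.

Definition Fm (p : nat -> R) (e : nat -> option nat) (k : nat) : R := psum (listing_mass p e) k.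

Lemma Fm_somes p e k : Fm p e k = lsum p (somes e k).
Proof.
  unfold Fm; induction k; simpl; auto. rewrite IHk, lsum_app. unfold listing_mass.
  destruct (e k); simpl; lra.
Qed.

Lemma in_somes e k z : In z (somes e k) <-> exists i, (i < k)%nat /\ e i = Some z.
Proof.
  induction k; simpl.
  - split; [tauto| intros [i [Hi _]]; lia].
  - rewrite in_app_iff, IHk. split.
    + intros [[i [Hi He]]|H]; [exists i; split; auto; lia|].
      destruct (e k) eqn:E; simpl in H; [|tauto]. destruct H as [<-|[]]. exists k; auto.
    + intros [i [Hi He]]. destruct (Nat.eq_dec i k) as [->|Hne].
      * right; rewrite He; simpl; auto.
      * left; exists i; split; auto; lia.
Qed.

Lemma nodup_somes p e k : sorted_listing p e -> NoDup (somes e k).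
Proof.
  intros (_ & _ & Hinj & _ & _). induction k; simpl; [constructor|].
  destruct (e k) eqn:E; [|rewrite app_nil_r; auto].
  apply NoDup_app; auto.
  - repeat constructor; simpl; tauto.
  - intros x Hx [<-|[]]. apply in_somes in Hx. destruct Hx as [i [Hi Hei]].
    specialize (Hinj _ _ _ Hei E). lia.
Qed.

Lemma listing_pos p e : sorted_listing p e -> forall k z, e k = Some z -> 0 < p z.
Proof. intros (_ & H & _); auto. Qed.

Lemma listing_some_before p e : sorted_listing p e -> forall i j z, e j = Some z -> (i <= j)%nat ->
  exists z', e i = Some z'.
Proof.
  intros (Hn & _) i j z Hj Hij. revert z Hj; induction Hij; intros z Hj; eauto.
  destruct (e m) eqn:E; [eapply IHHij; eauto|]. rewrite (Hn _ E) in Hj; discriminate.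
Qed.

Lemma listing_sorted p e : sorted_listing p e -> forall i j z z', (i <= j)%nat ->
  e i = Some z -> e j = Some z' -> p z' <= p z.
Proof.
  intros Hs i j z z' Hij. revert z'. induction Hij; intros z' Hi Hj.
  - rewrite Hi in Hj; injection Hj as ->; lra.
  - destruct (listing_some_before p e Hs m (S m) z' Hj (le_S _ _ (le_n _))) as [w Hw].
    destruct Hs as (_ & _ & _ & _ & Hso). specialize (Hso _ _ _ Hw Hj).
    specialize (IHHij w Hi Hw). lra.
Qed.

Lemma mass_nonneg p e : sorted_listing p e -> forall k, 0 <= listing_mass p e k.
Proof. intros Hs k; unfold listing_mass; destruct (e k) eqn:E; [|lra].
  apply Rlt_le; eapply listing_pos; eauto. Qed.

Lemma Fm_mono p e m n : sorted_listing p e -> (m <= n)%nat -> Fm p e m <= Fm p e n.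
Proof. intros; apply psum_mono; auto; apply mass_nonneg; auto. Qed.

Lemma Fm_nonneg p e k : sorted_listing p e -> 0 <= Fm p e k.
Proof. intros; apply psum_nonneg, mass_nonneg; auto. Qed.

Lemma Fm_S p e k : Fm p e (S k) = Fm p e k + listing_mass p e k.
Proof. reflexivity. Qed.

Lemma list_bound (l : list nat) : exists M, forall x, In x l -> (x < M)%nat.
Proof.
  induction l as [|a l [M HM]]; [exists O; simpl; tauto|].
  exists (S (max a M)). intros x [<-|Hx]; [lia|]. specialize (HM x Hx); lia.
Qed.

Lemma nodup_le_psum (p : nat -> R) l : (forall a, 0 <= p a) -> NoDup l ->
  exists M, lsum p l <= psum p M.
Proof.
  intros Hp Hn. destruct (list_bound l) as [M HM]. exists M. rewrite psum_seq.
  apply lsum_incl; auto. intros x Hx; apply in_seq. specialize (HM x Hx); lia.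
Qed.

Lemma Fm_le1 p e k : is_pmf p -> sorted_listing p e -> Fm p e k <= 1.
Proof.
  intros Hp Hs. rewrite Fm_somes.
  destruct (nodup_le_psum p (somes e k)) as [M HM]; [apply Hp| apply nodup_somes with p; auto|].
  pose proof (pmf_psum_le p M Hp); lra.
Qed.

Lemma lsum_filter_pos (p : nat -> R) l :
  lsum p l = lsum p (filter (fun z => if Rlt_dec 0 (p z) then true else false) l) \/
  ~ (forall a, 0 <= p a).
Proof.
  destruct (classic (forall a, 0 <= p a)) as [Hp|]; [left|right; auto].
  induction l; simpl; auto. destruct (Rlt_dec 0 (p a)); simpl; rewrite IHl; auto.
  specialize (Hp a); assert (p a = 0) by lra. rewrite H; lra.
Qed.

Lemma find_bound e (l : list nat) : (forall z, In z l -> exists i, e i = Some z) ->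
  exists K, forall z, In z l -> exists i, (i < K)%nat /\ e i = Some z.
Proof.
  induction l as [|a l IH]; intros H; [exists O; simpl; tauto|].
  destruct IH as [K HK]; [intros; apply H; right; auto|].
  destruct (H a (or_introl eq_refl)) as [i Hi].
  exists (S (max i K)). intros z [<-|Hz]; [exists i; split; auto; lia|].
  destruct (HK z Hz) as [j [Hj Hej]]; exists j; split; auto; lia.
Qed.

Lemma Fm_big p e eps : is_pmf p -> sorted_listing p e -> eps > 0 ->
  exists K, Fm p e K > 1 - eps.
Proof.
  intros Hp Hs He. destruct (pmf_psum_big p eps Hp He) as [N HN].
  rewrite psum_seq in HN.
  destruct (lsum_filter_pos p (seq 0 N)) as [Hf|Hf]; [|exfalso; apply Hf, Hp].
  set (L := filter _ (seq 0 N)) in Hf.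
  destruct (find_bound e L) as [K HK].
  { intros z Hz. unfold L in Hz. apply filter_In in Hz. destruct Hz as [_ Hz].
    destruct (Rlt_dec 0 (p z)); [|discriminate]. destruct Hs as (_&_&_&Hc&_). auto. }
  exists K. rewrite Fm_somes. apply Rlt_le_trans with (lsum p L); [lra|].
  apply lsum_incl; [apply Hp| apply NoDup_filter, seq_NoDup|].
  intros z Hz; apply in_somes; auto.
Qed.

Lemma value_unique_aux p e e' d k k' z z' : is_pmf p ->
  sorted_listing p e -> sorted_listing p e' -> e k = Some z -> e' k' = Some z' ->
  Fm p e k <= d -> d < Fm p e' (S k') -> p z < p z' -> False.
Proof.
  intros Hp Hs Hs' Hk Hk' H1 H2 Hlt.
  assert (Fm p e' (S k') <= Fm p e k); [|lra].
  rewrite !Fm_somes. apply lsum_incl; [apply Hp| eapply nodup_somes; eauto|].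
  intros y Hy. apply in_somes in Hy. destruct Hy as [i [Hi Hei]].
  assert (Hyz : p z' <= p y) by (eapply (listing_sorted p e' Hs' i k'); eauto; lia).
  assert (Hypos : 0 < p y) by (eapply listing_pos; eauto).
  destruct Hs as (Hn & Hpos & Hinj & Hcov & Hso) eqn:Hs0.
  destruct (Hcov y Hypos) as [m Hm]. apply in_somes. exists m; split; auto.
  destruct (Nat.lt_ge_cases m k) as [?|Hmk]; auto. exfalso.
  assert (p y <= p z) by (eapply (listing_sorted p e Hs k m); eauto). lra.
Qed.

Lemma value_unique p e e' d k k' z z' : is_pmf p ->
  sorted_listing p e -> sorted_listing p e' -> e k = Some z -> e' k' = Some z' ->
  Fm p e k <= d < Fm p e (S k) -> Fm p e' k' <= d < Fm p e' (S k') -> p z = p z'.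
Proof.
  intros Hp Hs Hs' Hk Hk' [H1 H2] [H3 H4].
  destruct (Rtotal_order (p z) (p z')) as [Hl|[Heq|Hg]]; auto; exfalso.
  - eapply (value_unique_aux p e e' d k k' z z'); eauto.
  - eapply (value_unique_aux p e' e d k' k z' z); eauto.
Qed.

Lemma cfun_eq p e d k z : is_pmf p -> sorted_listing p e -> e k = Some z ->
  Fm p e k <= d < Fm p e (S k) -> cfun p d = ln (/ p z).
Proof.
  intros Hp Hs Hk Hd. unfold cfun.
  match goal with |- epsilon ?i ?P = _ => assert (HP : P (epsilon i P)) end.
  { apply epsilon_spec. exists (ln (/ p z)). exists e; split; auto. exists k, z; auto. }
  destruct HP as [e' [Hs' [k' [z' [Hk' [Hd' ->]]]]]].
  rewrite (value_unique p e' e d k' k z' z); auto.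
Qed.

Lemma term_small (p : nat -> R) t : is_pmf p -> t > 0 -> exists N, forall z, (N <= z)%nat -> p z < t.
Proof.
  intros Hp Ht. destruct (pmf_psum_big p t Hp Ht) as [N HN]. exists N. intros z Hz.
  pose proof (pmf_psum_le p (S z) Hp). assert (psum p N <= psum p z) by (apply psum_mono; auto; apply Hp).
  simpl in H. lra.
Qed.

Lemma argmax_list (f : nat -> R) a l : exists m, In m (a :: l) /\ forall x, In x (a :: l) -> f x <= f m.
Proof.
  revert a; induction l as [|b l IH]; intros a.
  - exists a; split; [left; auto|]. intros x [<-|[]]; lra.
  - destruct (IH b) as [m [Hm Hmax]].
    destruct (Rle_dec (f a) (f m)).
    + exists m; split; [right; auto|]. intros x [<-|Hx]; auto.
    + exists a; split; [left; auto|]. intros x [<-|Hx]; [lra|]. specialize (Hmax x Hx); lra.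
Qed.

Lemma max_remaining (p : nat -> R) (l : list nat) z0 : is_pmf p -> ~ In z0 l -> 0 < p z0 ->
  exists z, ~ In z l /\ 0 < p z /\ forall z', ~ In z' l -> p z' <= p z.
Proof.
  intros Hp Hz0 Hpos. destruct (term_small p (p z0) Hp Hpos) as [N HN].
  set (C := filter (fun z => if in_dec Nat.eq_dec z l then false else true) (seq 0 N)).
  assert (HC : forall z, In z C <-> (z < N)%nat /\ ~ In z l).
  { intros z; unfold C; rewrite filter_In, in_seq. destruct (in_dec Nat.eq_dec z l); intuition; try discriminate; lia. }
  assert (Hz0C : In z0 C).
  { apply HC; split; auto. destruct (Nat.lt_ge_cases z0 N) as [Hq|Hq]; auto. specialize (HN z0 Hq); lra. }
  destruct C as [|a C'] eqn:EC; [destruct Hz0C|].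
  destruct (argmax_list p a C') as [m [Hm Hmax]].
  exists m. apply HC in Hm. destruct Hm as [Hm1 Hm2].
  assert (p z0 <= p m) by (apply Hmax; auto).
  split; auto; split; [lra|]. intros z' Hz'.
  destruct (Nat.lt_ge_cases z' N) as [H9|H9].
  - apply Hmax, HC; auto.
  - specialize (HN z' H9); lra.
Qed.

Section Greedy.
Variable p : nat -> R.
Hypothesis Hp : is_pmf p.

Definition pickP (l : list nat) (o : option nat) : Prop :=
  match o with
  | Some z => ~ In z l /\ 0 < p z /\ forall z', ~ In z' l -> p z' <= p z
  | None => forall z, ~ In z l -> p z <= 0
  end.

Definition pick (l : list nat) : option nat := epsilon (inhabits None) (pickP l).

Lemma pick_spec l : pickP l (pick l).
Proof.
  unfold pick; apply epsilon_spec.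
  destruct (classic (exists z, ~ In z l /\ 0 < p z)) as [[z0 [H1 H2]]|Hn].
  - destruct (max_remaining p l z0 Hp H1 H2) as [z Hz]. exists (Some z); exact Hz.
  - exists None. intros z Hz. destruct (Rle_dec (p z) 0); auto. exfalso; apply Hn; exists z; split; auto; lra.
Qed.

Fixpoint pref (k : nat) : list nat :=
  match k with O => [] | S k' => pref k' ++ (match pick (pref k') with Some z => [z] | None => [] end) end.

Definition gl (k : nat) : option nat := pick (pref k).

Lemma pref_mono a b : (a <= b)%nat -> incl (pref a) (pref b).
Proof. induction 1; [apply incl_refl|]. simpl. intros x Hx; apply in_or_app; left; auto. Qed.

Lemma gl_in_pref k z : gl k = Some z -> In z (pref (S k)).
Proof. unfold gl; intros H; simpl; rewrite H; apply in_or_app; right; left; auto. Qed.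

Lemma gl_notin k z : gl k = Some z -> ~ In z (pref k).
Proof. unfold gl; intros H. pose proof (pick_spec (pref k)) as S. rewrite H in S. simpl in S. tauto. Qed.

Lemma in_pref k z : In z (pref k) -> exists i, (i < k)%nat /\ gl i = Some z.
Proof.
  induction k; simpl; [tauto|]. intros H; apply in_app_or in H. destruct H as [H|H].
  - destruct (IHk H) as [i [Hi Hg]]; exists i; split; auto.
  - unfold gl. destruct (pick (pref k)) eqn:E; simpl in H; [|tauto]. destruct H as [<-|[]].
    exists k; auto.
Qed.

Lemma greedy_listing : sorted_listing p gl.
Proof.
  split; [|split; [|split; [|split]]].
  - intros k Hk. unfold gl in *. simpl. rewrite Hk, app_nil_r. exact Hk.
  - intros k z Hk. pose proof (pick_spec (pref k)) as S. unfold gl in Hk; rewrite Hk in S; simpl in S; tauto.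
  - intros k l z Hk Hl. destruct (Nat.lt_total k l) as [H|[H|H]]; auto; exfalso.
    + apply (gl_notin l z Hl). apply (pref_mono (S k) l); [lia|]. apply gl_in_pref; auto.
    + apply (gl_notin k z Hk). apply (pref_mono (S l) k); [lia|]. apply gl_in_pref; auto.
  - intros z Hz. apply NNPP; intros Hn.
    assert (Hnot : forall k, ~ In z (pref k)).
    { intros k Hk. apply in_pref in Hk. destruct Hk as [i [_ Hi]]. apply Hn; eauto. }
    assert (Hstep : forall k, exists w, gl k = Some w /\ p z <= p w).
    { intros k. pose proof (pick_spec (pref k)) as S. unfold gl. destruct (pick (pref k)) as [w|].
      - exists w; split; auto. apply S, Hnot.
      - specialize (S z (Hnot k)). lra. }
    assert (Hlen : forall k, INR k * p z <= lsum p (pref k) /\ NoDup (pref k)).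
    { induction k; [simpl; split; [lra|constructor]|]. cbn [pref].
      destruct (Hstep k) as [w [Hw Hpw]]. unfold gl in Hw. rewrite Hw. rewrite lsum_app. cbn [lsum].
      destruct IHk as [IH1 IH2]. split.
      - replace (INR (S k)) with (INR k + 1) by (rewrite S_INR; auto). lra.
      - apply NoDup_app; [exact IH2| repeat constructor; simpl; tauto|].
        intros x Hx [->|[]]. apply (gl_notin k x); auto. }
    destruct (INR_archimed (p z) 1 Hz) as [k Hk].
    destruct (Hlen k) as [H1 H2].
    destruct (nodup_le_psum p (pref k)) as [M HM]; [apply Hp|auto|].
    pose proof (pmf_psum_le p M Hp). lra.
  - intros k z z' Hk Hk'. pose proof (pick_spec (pref k)) as Sp. unfold gl in Hk; rewrite Hk in Sp.
    apply Sp. intros Hin. apply (gl_notin (S k) z' Hk'). simpl; rewrite Hk. apply in_or_app; left; auto.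
Qed.
End Greedy.

Lemma listing_exists p : is_pmf p -> exists e, sorted_listing p e.
Proof. intros Hp; exists (gl p); apply greedy_listing; auto. Qed.

Lemma INR_list_bound (l : list R) : exists N, forall i, In (INR i) l -> (i < N)%nat.
Proof.
  induction l as [|a l [N HN]]; [exists O; simpl; tauto|].
  destruct (classic (exists j, a = INR j)) as [[j ->]|Hn].
  - exists (S (max N j)). intros i [Hi|Hi].
    + apply INR_eq in Hi; lia.
    + specialize (HN i Hi); lia.
  - exists N. intros i [Hi|Hi]; [exfalso; apply Hn; eauto|auto].
Qed.

Lemma heine_borel (al bl : nat -> R) u v :
  (forall t, u <= t <= v -> exists i, al i < t < bl i) ->
  exists N, forall t, u <= t <= v -> exists i, (i < N)%nat /\ al i < t < bl i.
Proof.
  intros Hcov.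
  set (fam := fun x y => exists i : nat, x = INR i /\ al i < y < bl i).
  assert (Hcond : forall x, (exists y, fam x y) -> (fun x => exists i : nat, x = INR i) x).
  { intros x [y [i [Hi _]]]; eauto. }
  set (F := mkfamily (fun x => exists i : nat, x = INR i) fam Hcond).
  assert (Hopen : covering_open_set (fun c => u <= c <= v) F).
  { split.
    - intros y Hy. destruct (Hcov y Hy) as [i Hi]. exists (INR i). simpl. exists i; auto.
    - intros x y [i [Hx Hy]].
      assert (Hd : 0 < Rmin (y - al i) (bl i - y)) by (apply Rmin_pos; lra).
      exists (mkposreal _ Hd). intros z Hz. unfold disc in Hz; simpl in Hz.
      exists i; split; auto. apply Rabs_def2 in Hz.
      pose proof (Rmin_l (y - al i) (bl i - y)). pose proof (Rmin_r (y - al i) (bl i - y)). lra. }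
  destruct (compact_P3 u v F Hopen) as [D [Hc [l Hl]]].
  destruct (INR_list_bound l) as [N HN]. exists N. intros t Ht.
  destruct (Hc t Ht) as [y [[i [Hy Hi]] HD]]. exists i; split; auto.
  apply HN. rewrite <- Hy. apply Hl. split; auto. simpl. eauto.
Qed.

Fixpoint lsumP (f : R * R -> R) (l : list (R * R)) : R :=
  match l with [] => 0 | q :: l' => f q + lsumP f l' end.

Lemma lsumP_app f l1 l2 : lsumP f (l1 ++ l2) = lsumP f l1 + lsumP f l2.
Proof. induction l1; simpl; [lra| rewrite IHl1; lra]. Qed.

Lemma lsumP_nonneg f l : (forall q, 0 <= f q) -> 0 <= lsumP f l.
Proof. intros H; induction l; simpl; [lra| specialize (H a); lra]. Qed.

Lemma lsumP_le f g l : (forall q, In q l -> f q <= g q) -> lsumP f l <= lsumP g l.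
Proof. induction l; simpl; intros H; [lra|]. pose proof (H a (or_introl eq_refl)).
  assert (lsumP f l <= lsumP g l) by (apply IHl; intros; apply H; auto). lra. Qed.

Definition clip (u v : R) (q : R * R) : R := Rmax 0 (Rmin (snd q) v - Rmax (fst q) u).

Lemma clip_nonneg u v q : 0 <= clip u v q.
Proof. apply Rmax_l. Qed.

Lemma clip_mono u u' v q : u <= u' -> clip u' v q <= clip u v q.
Proof.
  intros H. unfold clip. apply Rle_max_compat_l.
  assert (Rmax (fst q) u <= Rmax (fst q) u') by (apply Rle_max_compat_l; auto). lra.
Qed.

Lemma finite_cover_len_n n : forall (L : list (R * R)) u v, (length L <= n)%nat ->
  (forall t, u <= t <= v -> exists q, In q L /\ fst q <= t <= snd q) ->
  v - u <= lsumP (clip u v) L.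
Proof.
  induction n as [|n IH]; intros L u v HlenL Hcov;
  (destruct (Rle_dec u v) as [Huv|Huv]; [|pose proof (lsumP_nonneg (clip u v) L (clip_nonneg u v)); lra]);
  destruct (Hcov u (conj (Rle_refl u) Huv)) as [q [Hq Hqu]];
  destruct (in_split _ _ Hq) as [A [B ->]].
  { rewrite length_app in HlenL; simpl in HlenL; lia. }
  rewrite lsumP_app; simpl.
  assert (HAB : 0 <= lsumP (clip u v) A /\ 0 <= lsumP (clip u v) B) by
    (split; apply lsumP_nonneg, clip_nonneg).
  destruct (Rle_dec v (snd q)) as [Hv|Hv].
  - assert (clip u v q = v - u).
    { unfold clip. rewrite Rmin_right by auto. rewrite (Rmax_right (fst q) u) by lra. rewrite Rmax_right by lra. auto. }
    lra.
  - assert (Hcq : clip u v q = snd q - u).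
    { unfold clip. rewrite Rmin_left by lra. rewrite (Rmax_right (fst q) u) by lra. rewrite Rmax_right by lra. auto. }
    assert (Hrest : forall eta, eta > 0 -> v - (snd q + eta) <= lsumP (clip u v) (A ++ B)).
    { intros eta He.
      assert (Hlen : (length (A ++ B) <= n)%nat) by (rewrite length_app in *; simpl in HlenL; lia).
      apply Rle_trans with (lsumP (clip (snd q + eta) v) (A ++ B)).
      - apply IH; auto. intros t Ht.
        assert (Hut : u <= t <= v) by lra.
        destruct (Hcov t Hut) as [q' [Hq' Ht']].
        exists q'; split; auto. apply in_app_or in Hq'; apply in_or_app. destruct Hq' as [?|[<-|?]]; auto.
        exfalso; lra.
      - apply lsumP_le. intros; apply clip_mono. lra. }
    rewrite lsumP_app in Hrest.
    assert (v - snd q <= lsumP (clip u v) A + lsumP (clip u v) B).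
    { apply le_epsilon. intros eta He. specialize (Hrest eta He). lra. }
    lra.
Qed.

Lemma finite_cover_len (L : list (R * R)) u v :
  (forall t, u <= t <= v -> exists q, In q L /\ fst q <= t <= snd q) ->
  v - u <= lsumP (clip u v) L.
Proof. apply (finite_cover_len_n (length L)); auto. Qed.

Ltac destr_inner :=
  repeat match goal with |- context [Rle_dec ?a ?b] =>
    lazymatch a with context [Rle_dec _ _] => fail | _ =>
    lazymatch b with context [Rle_dec _ _] => fail | _ => destruct (Rle_dec a b) end end end.

Fixpoint sortedT (w : R) (T : list (R * R)) : Prop :=
  match T with [] => True | q :: T' => w <= fst q /\ fst q < snd q /\ sortedT (snd q) T' end.

Lemma clip_sum_T T : forall w q, sortedT w T ->
  lsumP (fun t => clip (fst t) (snd t) q) T <= Rmax 0 (snd q - Rmax (fst q) w).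
Proof.
  induction T as [|[u v] T IH]; intros w [al bl] HT; simpl in *.
  - apply Rmax_l.
  - destruct HT as (H1 & H2 & H3). specialize (IH v (al, bl) H3). simpl in IH.
    pose proof (lsumP_nonneg (fun t => clip (fst t) (snd t) (al, bl)) T (fun t => clip_nonneg _ _ _)) as Hn.
    set (X := lsumP _ T) in *. clearbody X.
    unfold clip in *; simpl in *.
    revert IH. unfold Rmax, Rmin.
    destr_inner; intros; lra.
Qed.

Lemma lsumP_plus f g l : lsumP (fun q => f q + g q) l = lsumP f l + lsumP g l.
Proof. induction l; simpl; lra. Qed.

Lemma lsumP_exchange (g : R * R -> R * R -> R) T L :
  lsumP (fun q => lsumP (g q) L) T = lsumP (fun r => lsumP (fun q => g q r) T) L.
Proof.
  induction T; simpl.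
  - induction L; simpl; lra.
  - rewrite IHT. rewrite <- lsumP_plus. auto.
Qed.

Lemma lsumP_map_seq (f : R * R -> R) (h : nat -> R * R) N :
  lsumP f (map h (seq 0 N)) = psum (fun i => f (h i)) N.
Proof.
  rewrite psum_seq. generalize 0%nat. induction N; intros; simpl; auto. rewrite IHN. auto.
Qed.

Lemma inf_sum_psum_le f s : (forall i, 0 <= f i) -> infinite_sum f s -> forall N, psum f N <= s.
Proof.
  intros Hp Hs n. destruct (Rle_dec (psum f n) s) as [?|Hn]; auto. exfalso.
  destruct (Hs (psum f n - s)) as [N HN]; [lra|].
  specialize (HN (max N n) (Nat.le_max_l _ _)).
  assert (psum f n <= psum f (S (max N n))) by (apply psum_mono; auto; lia).
  rewrite psum_sum_f in H. unfold Rdist in HN. apply Rabs_def2 in HN. lra.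
Qed.

Lemma psum_scal c f N : psum (fun i => c * f i) N = c * psum f N.
Proof. rewrite !psum_seq, lsum_scal; auto. Qed.

Lemma psum_plus f g N : psum (fun i => f i + g i) N = psum f N + psum g N.
Proof. rewrite !psum_seq, lsum_plus; auto. Qed.

Lemma geom_psum N : psum (fun i => (/2) ^ (S i)) N = 1 - (/2) ^ N.
Proof. induction N; simpl; [lra|]. simpl in IHN. rewrite IHN. field. Qed.

Lemma geom_psum_le eta N : 0 <= eta -> psum (fun i => eta * (/2) ^ (S i)) N <= eta.
Proof.
  intros He. rewrite psum_scal, geom_psum.
  assert (0 <= (/2) ^ N) by (apply pow_le; lra). nra.
Qed.

Lemma uniform_N (T : list (R * R)) (P : R * R -> nat -> Prop) :
  (forall q N N', (N <= N')%nat -> P q N -> P q N') -> (forall q, In q T -> exists N, P q N) ->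
  exists N, forall q, In q T -> P q N.
Proof.
  intros Hm. induction T as [|q T IH]; intros H; [exists O; simpl; tauto|].
  destruct IH as [N HN]; [intros; apply H; right; auto|].
  destruct (H q (or_introl eq_refl)) as [N' HN'].
  exists (max N N'). intros q' [<-|Hq].
  - apply (Hm _ N'); auto; lia.
  - apply (Hm _ N); auto; lia.
Qed.

Lemma lsumP_scal c f l : lsumP (fun q => c * f q) l = c * lsumP f l.
Proof. induction l; simpl; [ring| rewrite IHl; ring]. Qed.

Lemma clip_mono_v u v v' q : v' <= v -> clip u v' q <= clip u v q.
Proof.
  intros H. unfold clip. apply Rle_max_compat_l.
  assert (Rmin (snd q) v' <= Rmin (snd q) v).
  { unfold Rmin; destruct (Rle_dec (snd q) v'), (Rle_dec (snd q) v); lra. }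
  lra.
Qed.

Lemma sortedT_lt T : forall w q, sortedT w T -> In q T -> fst q < snd q.
Proof.
  induction T as [|q' T IH]; intros w q HT Hq; [destruct Hq|].
  simpl in HT. destruct HT as (H1 & H2 & H3). destruct Hq as [<-|Hq]; auto. eapply IH; eauto.
Qed.

Lemma cover_lb (B : R -> Prop) T w (a b : nat -> R) s :
  sortedT w T -> (forall q, In q T -> forall t, fst q <= t < snd q -> B t) ->
  (forall i, a i <= b i) -> (forall t, B t -> exists i, a i <= t <= b i) ->
  infinite_sum (fun i => b i - a i) s ->
  lsumP (fun q => snd q - fst q) T <= s.
Proof.
  intros HT HB Hab Hcov Hs.
  set (X := lsumP (fun q => snd q - fst q) T).
  assert (HX0 : 0 <= X).
  { unfold X. clear -HT. revert w HT. induction T as [|q T IH]; intros w HT; simpl; [lra|].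
    simpl in HT. destruct HT as (_ & H1 & H2). specialize (IH _ H2). lra. }
  assert (Hmain : forall eps eta, 0 < eps < 1 -> 0 < eta -> (1 - eps) * X <= s + 2 * eta).
  { intros eps eta Heps Heta.
    set (d := fun i => eta * (/2) ^ (S i)).
    assert (Hd : forall i, 0 < d i) by (intros; unfold d; apply Rmult_lt_0_compat; auto; apply pow_lt; lra).
    set (al := fun i => a i - d i). set (bl := fun i => b i + d i).
    set (vp := fun q : R * R => snd q - eps * (snd q - fst q)).
    destruct (uniform_N T (fun q N => forall t, fst q <= t <= vp q -> exists i, (i < N)%nat /\ al i < t < bl i))
      as [N HN].
    { intros q N N' HNN' HP t Ht. destruct (HP t Ht) as [i [Hi Hi']]. exists i; split; auto; lia. }
    { intros q Hq. apply heine_borel. intros t Ht.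
      assert (Hq2 := HT). 
      assert (Hlt : fst q < snd q).
      { eapply sortedT_lt; eauto. }
      assert (Bt : B t) by (apply (HB q Hq); unfold vp in Ht; nra).
      destruct (Hcov t Bt) as [i Hi]. exists i. unfold al, bl. specialize (Hd i). lra. }
    set (L := map (fun i => (al i, bl i)) (seq 0 N)).
    assert (Hstep1 : (1 - eps) * X <= lsumP (fun q => lsumP (clip (fst q) (snd q)) L) T).
    { unfold X. rewrite <- lsumP_scal. apply lsumP_le. intros q Hq.
      apply Rle_trans with (lsumP (clip (fst q) (vp q)) L).
      - replace ((1 - eps) * (snd q - fst q)) with (vp q - fst q) by (unfold vp; ring).
        apply finite_cover_len. intros t Ht. destruct (HN q Hq t Ht) as [i [Hi Hi']].
        exists (al i, bl i). split; [apply in_map_iff; exists i; split; [reflexivity| apply in_seq; lia]| simpl; lra].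
      - apply lsumP_le. intros r _. apply clip_mono_v. unfold vp.
        assert (fst q < snd q).
        { eapply sortedT_lt; eauto. }
        nra. }
    rewrite lsumP_exchange in Hstep1.
    assert (Hstep2 : lsumP (fun r => lsumP (fun q => clip (fst q) (snd q) r) T) L <= lsumP (fun r => snd r - fst r) L).
    { apply lsumP_le. intros r Hr. apply Rle_trans with (Rmax 0 (snd r - Rmax (fst r) w)); [apply clip_sum_T; auto|].
      unfold L in Hr. apply in_map_iff in Hr. destruct Hr as [i [<- _]]. simpl.
      unfold al, bl. specialize (Hab i). specialize (Hd i).
      unfold Rmax; destruct (Rle_dec (a i - d i) w), (Rle_dec 0 _); lra. }
    unfold L in Hstep1, Hstep2. rewrite !lsumP_map_seq in Hstep1, Hstep2.
    rewrite lsumP_map_seq in Hstep2. simpl in Hstep2.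
    assert (Hstep3 : psum (fun i => bl i - al i) N <= s + 2 * eta).
    { replace (fun i => bl i - al i) with (fun i => (b i - a i) + 2 * d i)
        by (apply functional_extensionality; intros i; unfold al, bl; ring).
      rewrite psum_plus, psum_scal. unfold d.
      pose proof (geom_psum_le eta N (Rlt_le _ _ Heta)).
      pose proof (inf_sum_psum_le (fun i => b i - a i) s (fun i => ltac:(specialize (Hab i); lra)) Hs N). lra. }
    lra. }
  apply le_epsilon. intros dl Hdl.
  set (eps := Rmin (1/2) (dl / (2 * (X + 1)))).
  assert (He1 : 0 < eps) by (apply Rmin_pos; [lra| apply Rdiv_lt_0_compat; lra]).
  assert (He2 : eps <= 1/2) by apply Rmin_l.
  assert (He3 : eps <= dl / (2 * (X + 1))) by apply Rmin_r.
  assert (He4 : 0 < eps < 1) by lra. assert (Hdl4 : 0 < dl / 4) by lra.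
  specialize (Hmain eps (dl / 4) He4 Hdl4).
  assert (eps * X <= dl / 2).
  { apply Rle_trans with (dl / (2 * (X + 1)) * X); [apply Rmult_le_compat_r; auto|].
    apply Rmult_le_reg_r with (2 * (X + 1)); [lra|].
    replace (dl / (2 * (X + 1)) * X * (2 * (X + 1))) with (dl * X) by (field; lra). nra. }
  lra.
Qed.

Lemma trivial_cover (B : R -> Prop) : (forall t, B t -> 0 <= t < 1) -> cover_lengths B 1.
Proof.
  intros HB. exists (fun _ => 0), (fun i => match i with O => 1 | _ => 0 end).
  split; [intros [|i]; lra|]. split.
  - intros t Ht. exists O. specialize (HB t Ht). lra.
  - intros eps He. exists O. intros n _. unfold Rdist.
    replace (sum_f_R0 _ n) with 1; [rewrite Rminus_diag, Rabs_R0; lra|].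
    induction n; simpl; [lra|]. simpl in IHn. rewrite <- IHn. lra.
Qed.

Lemma leb_measure_lb (B : R -> Prop) T w : (forall t, B t -> 0 <= t < 1) -> sortedT w T ->
  (forall q, In q T -> forall t, fst q <= t < snd q -> B t) ->
  lsumP (fun q => snd q - fst q) T <= leb_measure B.
Proof.
  intros HB HT HTB. unfold leb_measure.
  set (E := fun s => cover_lengths B (- s)).
  assert (Hl : is_lub E (epsilon (inhabits 0) (fun l => is_lub E l))).
  { apply (lub_spec E (- lsumP (fun q => snd q - fst q) T)).
    - exists (-1). unfold E. replace (- -1) with 1 by lra. apply trivial_cover; auto.
    - intros x [a [b (Hab & Hc & Hs)]].
      pose proof (cover_lb B T w a b (- x) HT HTB Hab Hc Hs). lra. }
  destruct Hl as [_ Hl]. 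
  assert (epsilon (inhabits 0) (fun l => is_lub E l) <= - lsumP (fun q => snd q - fst q) T).
  { apply Hl. intros x [a [b (Hab & Hc & Hs)]].
    pose proof (cover_lb B T w a b (- x) HT HTB Hab Hc Hs). lra. }
  lra.
Qed.

Lemma leb_measure_nonneg (B : R -> Prop) : (forall t, B t -> 0 <= t < 1) -> 0 <= leb_measure B.
Proof.
  intros HB. apply (leb_measure_lb B [] 0 HB); simpl; tauto.
Qed.

Lemma leb_measure_le1 (B : R -> Prop) : (forall t, B t -> 0 <= t < 1) -> leb_measure B <= 1.
Proof.
  intros HB. unfold leb_measure.
  set (E := fun s => cover_lengths B (- s)).
  assert (Hl : is_lub E (epsilon (inhabits 0) (fun l => is_lub E l))).
  { apply (lub_spec E 0).
    - exists (-1). unfold E. replace (- -1) with 1 by lra. apply trivial_cover; auto.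
    - intros x [a [b (Hab & Hc & Hs)]].
      pose proof (cover_lb B [] 0 a b (- x) I ltac:(simpl; tauto) Hab Hc Hs). simpl in H. lra. }
  destruct Hl as [Hl _].
  assert (-1 <= epsilon (inhabits 0) (fun l => is_lub E l)).
  { apply Hl. unfold E. replace (- -1) with 1 by lra. apply trivial_cover; auto. }
  lra.
Qed.

Lemma lub_unique E x y : is_lub E x -> is_lub E y -> x = y.
Proof. intros [H1 H2] [H3 H4]. apply Rle_antisym; auto. Qed.

Lemma lub_transfer (E1 E2 : R -> Prop) V : is_lub E1 V ->
  (forall x, E2 x -> exists y, E1 y /\ x <= y) -> (forall y, E1 y -> exists x, E2 x /\ y <= x) ->
  is_lub E2 V.
Proof.
  intros [Hu Hl] H12 H21. split.
  - intros x Hx. destruct (H12 x Hx) as [y [Hy Hxy]]. specialize (Hu y Hy). lra.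
  - intros b Hb. apply Hl. intros y Hy. destruct (H21 y Hy) as [x [Hx Hyx]]. specialize (Hb x Hx). lra.
Qed.

Lemma lub_approx E l eps : is_lub E l -> eps > 0 -> exists x, E x /\ x > l - eps.
Proof.
  intros [Hu Hl] He. apply NNPP. intros Hn.
  assert (l <= l - eps); [|lra]. apply Hl. intros x Hx. destruct (Rle_dec x (l - eps)); auto.
  exfalso; apply Hn; exists x; split; auto; lra.
Qed.

Lemma lub_diff (A B : nat -> R) al be :
  (forall K K', (K <= K')%nat -> A K <= A K') ->
  (forall K K', (K <= K')%nat -> B K - A K <= B K' - A K') ->
  is_lub (fun s => exists K, s = A K) al -> is_lub (fun s => exists K, s = B K) be ->
  is_lub (fun s => exists K, s = B K - A K) (be - al).
Proof.
  intros HA HD HlA HlB. split.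
  - intros x [K ->]. apply le_epsilon. intros eps He.
    destruct (lub_approx _ _ eps HlA He) as [x [[K1 ->] Hx]].
    pose proof (HD K (max K K1) (Nat.le_max_l _ _)).
    pose proof (HA K1 (max K K1) (Nat.le_max_r _ _)).
    assert (B (max K K1) <= be) by (apply HlB; eauto).
    lra.
  - intros u Hu. apply le_epsilon. intros eps He.
    destruct (lub_approx _ _ eps HlB He) as [x [[K2 ->] Hx]].
    assert (A K2 <= al) by (apply HlA; eauto).
    assert (B K2 - A K2 <= u) by (apply Hu; eauto). lra.
Qed.

Lemma ln_ineq u v g : 0 < u -> 0 < v -> ln (/ u) - ln (/ v) >= g -> u <= exp (- g) * v.
Proof.
  intros Hu Hv H. rewrite !ln_Rinv in H by auto.
  assert (Hl : ln u <= ln v + - g) by lra.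
  rewrite <- (exp_ln u Hu), <- (exp_ln v Hv) at 1. rewrite (Rmult_comm (exp (- g))), <- exp_plus.
  destruct (Rle_lt_or_eq_dec _ _ Hl) as [H1|H1]; [apply Rlt_le, exp_increasing; auto| rewrite H1; lra].
Qed.

Lemma tele (h W : nat -> R) : (forall j, 0 <= h j) -> (forall j, 0 <= W j) ->
  (forall j, W j <= h j -> h (S j) = h j - W j) ->
  forall J, psum (fun j => Rabs (h (S j) - h j)) J <= h O + 2 * psum (fun j => Rmin (h j) (W j)) J + h J.
Proof.
  intros H0 HW Hr J. induction J; [simpl; pose proof (H0 O); lra|].
  cbn [psum]. destruct (Rle_dec (W J) (h J)) as [Hle|Hlt].
  - rewrite (Hr J Hle). rewrite Rmin_right by auto.
    replace (h J - W J - h J) with (- W J) by ring. rewrite Rabs_Ropp, Rabs_right by (apply Rle_ge; auto).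
    pose proof (HW J). lra.
  - rewrite Rmin_left by lra. pose proof (H0 J). pose proof (H0 (S J)).
    pose proof (Rabs_triang (h (S J)) (- h J)). rewrite Rabs_Ropp in H2.
    rewrite (Rabs_right (h (S J))) in H2 by lra. rewrite (Rabs_right (h J)) in H2 by lra. replace (h (S J) + - h J) with (h (S J) - h J) in H2 by ring. lra.
Qed.

Lemma lsum_filter_zero (f : nat -> R) (P : nat -> bool) l : (forall y, P y = false -> f y = 0) ->
  lsum f l = lsum f (filter P l).
Proof.
  intros H. induction l; simpl; auto. destruct (P a) eqn:E; simpl; rewrite IHl; auto. rewrite (H a E); lra.
Qed.

Lemma sortedT_weak w w' T : w' <= w -> sortedT w T -> sortedT w' T.
Proof. destruct T as [|q T]; simpl; auto. intros H [H1 H2]; split; [lra|auto]. Qed.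

Section PerX.
Variables (p w : nat -> R) (eZ eW : nat -> option nat).
Hypotheses (Hp : is_pmf p) (Hw : is_pmf w) (HeZ : sorted_listing p eZ) (HeW : sorted_listing w eW).

Definition c k := Fm p eZ k.
Definition a j := Fm w eW j.

Lemma c_mono i j : (i <= j)%nat -> c i <= c j.
Proof. apply Fm_mono; auto. Qed.
Lemma a_mono i j : (i <= j)%nat -> a i <= a j.
Proof. apply Fm_mono; auto. Qed.
Lemma c_bounds k : 0 <= c k <= 1.
Proof. split; [apply Fm_nonneg|apply Fm_le1]; auto. Qed.
Lemma a_bounds k : 0 <= a k <= 1.
Proof. split; [apply Fm_nonneg|apply Fm_le1]; auto. Qed.

Lemma find_interval t : 0 <= t < 1 -> exists j, a j <= t < a (S j).
Proof.
  intros Ht. destruct (Fm_big w eW (1 - t) Hw HeW ltac:(lra)) as [J HJ].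
  assert (HJ' : a J > t) by (unfold a; lra). clear HJ.
  induction J.
  - unfold a, Fm in HJ'; simpl in HJ'. lra.
  - destruct (Rlt_dec t (a J)) as [H|H]; [apply IHJ; lra|]. exists J; split; [lra|auto].
Qed.

Lemma interval_unique t j j' : a j <= t < a (S j) -> a j' <= t < a (S j') -> j = j'.
Proof.
  intros H1 H2. destruct (Nat.lt_total j j') as [H|[H|H]]; auto; exfalso.
  - pose proof (a_mono (S j) j' H). lra.
  - pose proof (a_mono (S j') j H). lra.
Qed.

Lemma c_lt1 k z : eZ k = Some z -> c k < 1.
Proof.
  intros Hk. pose proof (c_bounds (S k)). unfold c in *. rewrite Fm_S in H.
  unfold listing_mass in H; rewrite Hk in H. pose proof (listing_pos p eZ HeZ k z Hk). lra.
Qed.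

Definition phi (z : nat) : nat :=
  epsilon (inhabits 0%nat) (fun y => exists k j, eZ k = Some z /\ eW j = Some y /\ a j <= c k < a (S j)).

Lemma phi_spec k z : eZ k = Some z -> exists j, eW j = Some (phi z) /\ a j <= c k < a (S j).
Proof.
  intros Hk.
  assert (Hex : exists y, exists k j, eZ k = Some z /\ eW j = Some y /\ a j <= c k < a (S j)).
  { destruct (find_interval (c k)) as [j Hj]; [split; [apply c_bounds| eapply c_lt1; eauto]|].
    assert (Hm : 0 < listing_mass w eW j).
    { assert (H : a (S j) = a j + listing_mass w eW j) by (unfold a; rewrite Fm_S; auto). lra. }
    unfold listing_mass in Hm. destruct (eW j) as [y|] eqn:Ey; [|lra].
    exists y, k, j; auto. }
  pose proof (epsilon_spec (inhabits 0%nat) _ Hex) as Hs. fold (phi z) in Hs.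
  destruct Hs as [k' [j [Hk' [Hj Hint]]]].
  destruct HeZ as (_ & _ & Hinj & _). rewrite (Hinj _ _ _ Hk' Hk) in Hint. eauto.
Qed.

Lemma phi_eq k z j y : eZ k = Some z -> eW j = Some y -> (phi z = y <-> a j <= c k < a (S j)).
Proof.
  intros Hk Hj. destruct (phi_spec k z Hk) as [j' [Hj' Hint]]. split.
  - intros <-. destruct HeW as (_ & _ & Hinj & _). rewrite (Hinj _ _ _ Hj Hj'). auto.
  - intros Hint2. rewrite (interval_unique _ _ _ Hint Hint2) in Hj'. rewrite Hj in Hj'. congruence.
Qed.

Definition St (t : R) (K : nat) : R := psum (fun k => if Rlt_dec (c k) t then listing_mass p eZ k else 0) K.

Lemma St_S t K : St t (S K) = St t K + (if Rlt_dec (c K) t then listing_mass p eZ K else 0).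
Proof. reflexivity. Qed.

Lemma St_term_nonneg t k : 0 <= (if Rlt_dec (c k) t then listing_mass p eZ k else 0).
Proof. destruct (Rlt_dec (c k) t); [apply mass_nonneg; auto| lra]. Qed.

Lemma St_le_c t K : St t K <= c K.
Proof.
  induction K; [unfold St, c, Fm; simpl; lra|].
  unfold St; cbn [psum]; fold (St t K). replace (c (S K)) with (c K + listing_mass p eZ K) by (unfold c; rewrite Fm_S; auto).
  pose proof (mass_nonneg p eZ HeZ K). destruct (Rlt_dec (c K) t); lra.
Qed.

Lemma St_mono t K K' : (K <= K')%nat -> St t K <= St t K'.
Proof. intros; apply psum_mono; auto. intros; apply St_term_nonneg. Qed.

Lemma St_mono_t t t' K : t <= t' -> St t K <= St t' K.
Proof.
  intros H. unfold St. induction K; cbn [psum]; [lra|].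
  pose proof (mass_nonneg p eZ HeZ K).
  destruct (Rlt_dec (c K) t), (Rlt_dec (c K) t'); lra.
Qed.

Definition Hf (t : R) : R := epsilon (inhabits 0) (fun l => is_lub (fun s => exists K, s = St t K) l).

Lemma Hf_lub t : is_lub (fun s => exists K, s = St t K) (Hf t).
Proof.
  unfold Hf. apply (lub_spec _ 1).
  - exists (St t 0); eauto.
  - intros x [K ->]. pose proof (St_le_c t K). pose proof (c_bounds K). lra.
Qed.

Lemma Hf_ge_St t K : St t K <= Hf t.
Proof. destruct (Hf_lub t) as [H _]. apply H; eauto. Qed.

Lemma Hf_le t B : (forall K, St t K <= B) -> Hf t <= B.
Proof. intros HB. destruct (Hf_lub t) as [_ H]. apply H. intros x [K ->]; auto. Qed.

Lemma Hf_le1 t : Hf t <= 1.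
Proof. apply Hf_le. intros K. pose proof (St_le_c t K). pose proof (c_bounds K). lra. Qed.

Lemma Hf_mono t t' : t <= t' -> Hf t <= Hf t'.
Proof. intros H. apply Hf_le. intros K. apply Rle_trans with (St t' K); [apply St_mono_t; auto| apply Hf_ge_St]. Qed.

Lemma St_ge_min t K : Rmin (c K) t <= St t K.
Proof.
  induction K.
  - unfold St, c, Fm; simpl. apply Rmin_l.
  - unfold St in *. cbn [psum]. fold (St t K) in *.
    assert (H : c (S K) = c K + listing_mass p eZ K) by (unfold c; rewrite Fm_S; auto).
    pose proof (mass_nonneg p eZ HeZ K). pose proof (c_mono K (S K) (le_S _ _ (le_n _))).
    destruct (Rlt_dec (c K) t).
    + rewrite Rmin_left in IHK by lra. apply Rle_trans with (c (S K)); [apply Rmin_l| lra].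
    + rewrite Rmin_right in IHK by lra. apply Rle_trans with t; [apply Rmin_r| lra].
Qed.

Lemma Hf_ge t : t <= 1 -> t <= Hf t.
Proof.
  intros Ht. apply le_epsilon. intros eps He.
  destruct (Fm_big p eZ eps Hp HeZ He) as [K HK]. fold (c K) in HK.
  pose proof (St_ge_min t K). pose proof (Hf_ge_St t K).
  unfold Rmin in H. destruct (Rle_dec (c K) t); lra.
Qed.

Lemma Hf_0 : Hf 0 = 0.
Proof.
  apply Rle_antisym; [|apply Hf_ge; lra]. apply Hf_le. intros K. unfold St.
  rewrite psum_seq. rewrite (lsum_ext _ (fun _ => 0)); [| intros k _; destruct (Rlt_dec (c k) 0); auto; pose proof (c_bounds k); lra].
  clear. induction (seq 0 K); simpl; lra.
Qed.

Lemma St_bound t k : t <= c (S k) -> forall K, St t K <= c (S k).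
Proof.
  intros Ht K. destruct (Nat.le_gt_cases K (S k)) as [HK|HK].
  - apply Rle_trans with (c K); [apply St_le_c| apply c_mono; auto].
  - induction HK.
    + rewrite St_S.
      destruct (Rlt_dec (c (S k)) t); [lra|]. pose proof (St_le_c t (S k)); lra.
    + rewrite St_S.
      destruct (Rlt_dec (c m) t); [|lra].
      pose proof (c_mono (S k) m ltac:(lia)). lra.
Qed.

Lemma St_full t k : c k < t -> St t (S k) = c (S k).
Proof.
  intros Hk. unfold St. change (c (S k)) with (psum (listing_mass p eZ) (S k)).
  rewrite !psum_seq. apply lsum_ext.
  intros i Hi. apply in_seq in Hi. destruct (Rlt_dec (c i) t); auto.
  pose proof (c_mono i k ltac:(lia)). lra.
Qed.

Lemma Hf_straddle t : 0 < t -> t < Hf t ->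
  exists k z, eZ k = Some z /\ c k < t /\ t <= c (S k) /\ Hf t = c (S k).
Proof.
  intros Ht0 Ht. pose proof (Hf_le1 t).
  destruct (Fm_big p eZ (1 - t) Hp HeZ ltac:(lra)) as [K HK]. fold (c K) in HK.
  assert (Hex : exists k, c k < t /\ t <= c (S k)).
  { assert (HK' : t <= c K) by lra. clear -HK' Ht0. induction K.
    - unfold c, Fm in HK'; simpl in HK'. lra.
    - destruct (Rlt_dec (c K) t) as [H|H]; [exists K; split; auto; lra| apply IHK; lra]. }
  destruct Hex as [k [Hk1 Hk2]].
  assert (Hm : 0 < listing_mass p eZ k).
  { assert (H1 : c (S k) = c k + listing_mass p eZ k) by (unfold c; rewrite Fm_S; auto). lra. }
  unfold listing_mass in Hm. destruct (eZ k) as [z|] eqn:Ez; [|lra].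
  exists k, z; repeat split; auto.
  apply Rle_antisym.
  - apply Hf_le. apply St_bound; auto.
  - rewrite <- (St_full t k Hk1). apply Hf_ge_St.
Qed.

Lemma Hf_flat t t' : 0 <= t -> t <= t' -> t' <= Hf t -> Hf t' = Hf t.
Proof.
  intros H0 Htt' Ht'. apply Rle_antisym; [|apply Hf_mono; auto].
  destruct (Rle_lt_or_eq_dec 0 t H0) as [Hpos|<-].
  - destruct (Rlt_or_le t (Hf t)) as [Hlt|Hle].
    + destruct (Hf_straddle t Hpos Hlt) as [k [z [_ [_ [_ Heq]]]]].
      rewrite Heq. apply Hf_le. apply St_bound. lra.
    + pose proof (Hf_le1 t). assert (Ht1 : t <= 1) by lra. pose proof (Hf_ge t Ht1).
      assert (t' = t) by lra. subst; lra.
  - rewrite Hf_0 in *. assert (t' = 0) by lra. subst. rewrite Hf_0; lra.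
Qed.

Lemma reindex (g : nat -> R) : (forall z, 0 <= g z) -> (forall z, 0 < g z -> exists k, eZ k = Some z) ->
  (forall N, exists K, psum g N <= lsum g (somes eZ K)) /\
  (forall K, exists N, lsum g (somes eZ K) <= psum g N).
Proof.
  intros Hg Hcov. split.
  - intros N. rewrite psum_seq.
    destruct (lsum_filter_pos g (seq 0 N)) as [Hf|Hf]; [|exfalso; apply Hf, Hg].
    set (L := filter _ (seq 0 N)) in Hf.
    destruct (find_bound eZ L) as [K HK].
    { intros z Hz. unfold L in Hz. apply filter_In in Hz. destruct Hz as [_ Hz].
      destruct (Rlt_dec 0 (g z)); [|discriminate]. auto. }
    exists K. rewrite Hf. apply lsum_incl; [apply Hg| apply NoDup_filter, seq_NoDup|].
    intros z Hz; apply in_somes; auto.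
  - intros K. apply nodup_le_psum; auto. eapply nodup_somes; eauto.
Qed.

Definition Qy (y : nat) : R := sumR (fun z => if Nat.eqb (phi z) y then p z else 0).

Lemma pnonneg z : 0 <= p z.
Proof. apply Hp. Qed.
Lemma wnonneg z : 0 <= w z.
Proof. apply Hw. Qed.

Lemma gy_somes j y K : eW j = Some y ->
  lsum (fun z => if Nat.eqb (phi z) y then p z else 0) (somes eZ K) = St (a (S j)) K - St (a j) K.
Proof.
  intros Hj. pose proof (a_mono j (S j) (le_S _ _ (le_n _))) as Hab.
  induction K; [simpl; unfold St; simpl; lra|].
  cbn [somes]. rewrite lsum_app, IHK, !St_S. unfold listing_mass.
  destruct (eZ K) as [z|] eqn:Ez; simpl; [|destruct (Rlt_dec (c K) (a (S j))), (Rlt_dec (c K) (a j)); lra].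
  destruct (Nat.eqb (phi z) y) eqn:Eb.
  - apply Nat.eqb_eq in Eb. apply (phi_eq K z j y Ez Hj) in Eb.
    destruct (Rlt_dec (c K) (a (S j))), (Rlt_dec (c K) (a j)); lra.
  - apply Nat.eqb_neq in Eb. assert (Hn : ~ (a j <= c K < a (S j))) by (intros H; apply Eb, (phi_eq K z j y Ez Hj), H).
    destruct (Rlt_dec (c K) (a (S j))), (Rlt_dec (c K) (a j)); try lra; exfalso; apply Hn; lra.
Qed.

Lemma somes_prefix e K K' : (K <= K')%nat -> exists r, somes e K' = somes e K ++ r.
Proof.
  induction 1; [exists []; rewrite app_nil_r; auto|].
  destruct IHle as [r Hr]. cbn [somes]. rewrite Hr, <- app_assoc. eauto.
Qed.

Lemma Qy_val j y : eW j = Some y -> Qy y = Hf (a (S j)) - Hf (a j).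
Proof.
  intros Hj. set (g := fun z => if Nat.eqb (phi z) y then p z else 0).
  assert (Hg : forall z, 0 <= g z) by (intros z; unfold g; destruct (Nat.eqb _ _); [apply pnonneg|lra]).
  assert (Hgc : forall z, 0 < g z -> exists k, eZ k = Some z).
  { intros z Hz. unfold g in Hz. destruct (Nat.eqb _ _); [|lra]. destruct HeZ as (_&_&_&Hc&_); auto. }
  destruct (reindex g Hg Hgc) as [R1 R2].
  assert (HL : is_lub (fun s => exists K, s = St (a (S j)) K - St (a j) K) (Hf (a (S j)) - Hf (a j))).
  { apply lub_diff; try apply Hf_lub.
    - intros; apply St_mono; auto.
    - intros K K' HK. rewrite <- !(gy_somes j y) by auto. fold g.
      destruct (somes_prefix eZ K K' HK) as [r ->]. rewrite lsum_app.
      pose proof (lsum_nonneg g r Hg). lra. }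
  assert (HL2 : is_lub (fun s => exists N, s = psum g N) (Hf (a (S j)) - Hf (a j))).
  { apply (lub_transfer _ _ _ HL).
    - intros x [N ->]. destruct (R1 N) as [K HK]. exists (St (a (S j)) K - St (a j) K).
      split; eauto. rewrite <- (gy_somes j y) by auto. auto.
    - intros x [K ->]. destruct (R2 K) as [N HN]. exists (psum g N). split; eauto.
      rewrite <- (gy_somes j y) by auto. auto. }
  unfold Qy. fold g. apply (lub_unique (fun s => exists N, s = psum g N)); auto.
  apply (sumR_lub g (Hf (a (S j)) - Hf (a j))). intros N. apply HL2; eauto.
Qed.

Lemma Qy_zero y : (forall j, eW j <> Some y) -> Qy y = 0.
Proof.
  intros Hn. unfold Qy. apply sumR_zero. intros z.
  destruct (Nat.eqb (phi z) y) eqn:Eb; auto.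
  apply Nat.eqb_eq in Eb. destruct (Rle_dec (p z) 0) as [H|H]; [pose proof (pnonneg z); lra|].
  destruct HeZ as (_&_&_&Hc&_). destruct (Hc z ltac:(lra)) as [k Hk].
  destruct (phi_spec k z Hk) as [j [Hj _]]. rewrite Eb in Hj. exfalso; eapply Hn; eauto.
Qed.

Definition hh j := Hf (a j) - a j.
Definition Wm j := listing_mass w eW j.
Definition gp j := Rmin (hh j) (Wm j).

Lemma a_S j : a (S j) = a j + Wm j.
Proof. unfold a, Wm. apply Fm_S. Qed.

Lemma Wm_nonneg j : 0 <= Wm j.
Proof. apply mass_nonneg; auto. Qed.

Lemma hh_nonneg j : 0 <= hh j.
Proof. unfold hh. pose proof (Hf_ge (a j) ltac:(apply a_bounds)). lra. Qed.

Lemma hh_0 : hh O = 0.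
Proof. unfold hh. replace (a O) with 0 by (unfold a, Fm; simpl; auto). rewrite Hf_0; lra. Qed.

Lemma hh_rec j : Wm j <= hh j -> hh (S j) = hh j - Wm j.
Proof.
  intros H. unfold hh in *. rewrite a_S in *.
  rewrite (Hf_flat (a j) (a j + Wm j)); [lra| apply a_bounds| pose proof (Wm_nonneg j); lra| lra].
Qed.

Lemma hh_le j : hh j <= 1 - a j.
Proof. unfold hh. pose proof (Hf_le1 (a j)). lra. Qed.

Lemma gp_nonneg j : 0 <= gp j.
Proof. unfold gp. apply Rmin_glb; [apply hh_nonneg|apply Wm_nonneg]. Qed.

Definition Bset (g : R) : R -> Prop := fun d => 0 <= d < 1 /\ cfun p d - cfun w d < g.

Lemma gp_good j g : (exists d, a j <= d < a j + gp j /\ ~ Bset g d) -> gp j <= exp (- g) * Wm j.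
Proof.
  intros [d [Hd HnB]].
  assert (Hgp : 0 < gp j) by lra.
  assert (Hh : 0 < hh j) by (pose proof (Rmin_l (hh j) (Wm j)); fold (gp j) in H; lra).
  assert (HW : 0 < Wm j) by (pose proof (Rmin_r (hh j) (Wm j)); fold (gp j) in H; lra).
  assert (Hgh : gp j <= hh j) by apply Rmin_l.
  assert (HgW : gp j <= Wm j) by apply Rmin_r.
  pose proof HW as HW'. unfold Wm, listing_mass in HW'. destruct (eW j) as [y|] eqn:Ey; [|lra].
  assert (Hwy : Wm j = w y) by (unfold Wm, listing_mass; rewrite Ey; auto).
  assert (Haj : 0 < a j).
  { pose proof (a_bounds j). destruct (Rle_lt_or_eq_dec 0 (a j) (proj1 H)) as [?|Heq]; auto.
    unfold hh in Hh. rewrite <- Heq, Hf_0 in Hh. lra. }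
  unfold hh in Hh.
  destruct (Hf_straddle (a j) Haj ltac:(lra)) as [k [z [Hk [Hk1 [Hk2 Hk3]]]]].
  assert (Hpz : p z = c (S k) - c k).
  { unfold c. rewrite Fm_S. unfold listing_mass; rewrite Hk; ring. }
  assert (Hpz0 : 0 < p z) by (eapply listing_pos; eauto).
  assert (Hwy0 : 0 < w y) by (eapply listing_pos; eauto).
  assert (Hcz : cfun p d = ln (/ p z)).
  { apply (cfun_eq p eZ d k z Hp HeZ Hk). fold (c k) (c (S k)). unfold hh in Hgh. lra. }
  assert (Hcw : cfun w d = ln (/ w y)).
  { apply (cfun_eq w eW d j y Hw HeW Ey). fold (a j) (a (S j)). rewrite a_S. lra. }
  assert (Hd01 : 0 <= d < 1).
  { pose proof (a_bounds (S j)). rewrite a_S in H. lra. }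
  assert (Hge : cfun p d - cfun w d >= g).
  { destruct (Rlt_dec (cfun p d - cfun w d) g); [exfalso; apply HnB; split; auto| lra]. }
  rewrite Hcz, Hcw in Hge. pose proof (ln_ineq (p z) (w y) g Hpz0 Hwy0 Hge).
  unfold hh in Hgh. rewrite Hwy. lra.
Qed.

Definition incl_cond (g : R) (j : nat) : Prop :=
  0 < gp j /\ forall d, a j <= d < a j + gp j -> Bset g d.

Fixpoint tl (g : R) (j n : nat) : list (R * R) :=
  match n with
  | O => []
  | S n' => (if excluded_middle_informative (incl_cond g j) then [(a j, a j + gp j)] else []) ++ tl g (S j) n'
  end.

Lemma tl_sorted g n : forall j, sortedT (a j) (tl g j n).
Proof.
  induction n; intros j; simpl; auto.
  destruct (excluded_middle_informative (incl_cond g j)) as [[H1 H2]|H]; simpl.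
  - split; [lra|]. split; [lra|]. apply sortedT_weak with (a (S j)); auto.
    rewrite a_S. pose proof (Rmin_r (hh j) (Wm j)). fold (gp j) in H. lra.
  - apply sortedT_weak with (a (S j)); auto. apply a_mono; lia.
Qed.

Lemma tl_in g n : forall j q, In q (tl g j n) -> forall t, fst q <= t < snd q -> Bset g t.
Proof.
  induction n; intros j q Hq; simpl in Hq; [destruct Hq|].
  apply in_app_or in Hq. destruct Hq as [Hq|Hq]; [|eapply IHn; eauto].
  destruct (excluded_middle_informative (incl_cond g j)) as [[H1 H2]|H]; simpl in Hq; [|destruct Hq].
  destruct Hq as [<-|[]]. simpl. auto.
Qed.

Lemma tl_bound g n : forall j, lsum gp (seq j n) <= exp (- g) * lsum Wm (seq j n) + lsumP (fun q => snd q - fst q) (tl g j n).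
Proof.
  induction n; intros j; simpl; [lra|]. rewrite lsumP_app. specialize (IHn (S j)).
  assert (Hex : 0 < exp (- g)) by apply exp_pos. pose proof (Wm_nonneg j). pose proof (gp_nonneg j).
  destruct (excluded_middle_informative (incl_cond g j)) as [Hc|Hc]; simpl.
  - pose proof (Rmult_le_pos _ _ (Rlt_le _ _ Hex) H). lra.
  - assert (gp j <= exp (- g) * Wm j).
    { destruct (Rle_dec (gp j) 0) as [Hz|Hz]; [pose proof (Rmult_le_pos _ _ (Rlt_le _ _ Hex) H); lra|].
      apply gp_good. apply NNPP. intros Hn. apply Hc. split; [lra|].
      intros d Hd. apply NNPP. intros Hb. apply Hn. exists d; auto. }
    lra.
Qed.

Lemma err_J g J : psum (fun j => Rabs (hh (S j) - hh j)) J <= 2 * exp (- g) + 2 * leb_measure (Bset g) + (1 - a J).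
Proof.
  pose proof (tele hh Wm hh_nonneg Wm_nonneg hh_rec J) as HT. fold gp in HT.
  rewrite hh_0 in HT. pose proof (hh_le J).
  pose proof (tl_bound g J O) as HB. rewrite <- !psum_seq in HB.
  assert (HW : psum Wm J <= 1).
  { assert (psum Wm J = a J).
    { unfold a, Fm, Wm. reflexivity. }
    rewrite H0. apply a_bounds. }
  assert (HM : lsumP (fun q => snd q - fst q) (tl g O J) <= leb_measure (Bset g)).
  { apply (leb_measure_lb _ _ (a O)).
    - intros t [Ht _]; auto.
    - apply tl_sorted.
    - apply tl_in. }
  assert (Hex : 0 < exp (- g)) by apply exp_pos.
  assert (exp (- g) * psum Wm J <= exp (- g)).
  { rewrite <- (Rmult_1_r (exp (- g))) at 2. apply Rmult_le_compat_l; lra. }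
  lra.
Qed.

Definition jidx (y : nat) : nat := epsilon (inhabits 0%nat) (fun j => eW j = Some y).
Definition yof (j : nat) : nat := match eW j with Some y => y | None => 0%nat end.

Lemma per_x_bound g N : lsum (fun y => Rabs (w y - Qy y)) (seq 0 N) <= 2 * exp (- g) + 2 * leb_measure (Bset g).
Proof.
  set (f := fun y => Rabs (w y - Qy y)).
  set (P := fun y => if excluded_middle_informative (exists j, eW j = Some y) then true else false).
  rewrite (lsum_filter_zero f P).
  2:{ intros y Hy. unfold P in Hy. destruct (excluded_middle_informative _) as [_|Hn]; [discriminate|].
      unfold f. rewrite Qy_zero by (intros j Hj; apply Hn; eauto).
      assert (w y = 0).
      { destruct (Rle_dec (w y) 0); [pose proof (wnonneg y); lra|].
        destruct HeW as (_&_&_&Hc&_). exfalso; apply Hn. apply Hc; lra. }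
      rewrite H, Rminus_diag, Rabs_R0; auto. }
  set (Ly := filter P (seq 0 N)).
  assert (HLy : forall y, In y Ly -> eW (jidx y) = Some y).
  { intros y Hy. unfold Ly in Hy. apply filter_In in Hy. destruct Hy as [_ Hy]. unfold P in Hy.
    destruct (excluded_middle_informative _) as [Hex|]; [|discriminate].
    unfold jidx. apply (epsilon_spec (inhabits 0%nat) (fun j => eW j = Some y)); auto. }
  set (Lj := map jidx Ly).
  assert (Hmap : map yof Lj = Ly).
  { unfold Lj. rewrite map_map. rewrite <- (map_id Ly) at 2. apply map_ext_in.
    intros y Hy. unfold yof. rewrite HLy; auto. }
  assert (HnodupJ : NoDup Lj).
  { apply (NoDup_map_inv yof). rewrite Hmap. apply NoDup_filter, seq_NoDup. }
  rewrite <- Hmap, lsum_map.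
  apply le_epsilon. intros eps He.
  destruct (Fm_big w eW eps Hw HeW He) as [J0 HJ0]. fold (a J0) in HJ0.
  destruct (list_bound Lj) as [M HM].
  set (J := max M J0).
  assert (H1 : lsum (fun j => f (yof j)) Lj <= lsum (fun j => Rabs (hh (S j) - hh j)) Lj).
  { apply lsum_le. intros j Hj. unfold Lj in Hj. apply in_map_iff in Hj. destruct Hj as [y [<- Hy]].
    pose proof (HLy y Hy) as Hj. unfold f, yof. rewrite Hj.
    rewrite (Qy_val (jidx y) y Hj). unfold hh.
    assert (Hwy : w y = a (S (jidx y)) - a (jidx y)).
    { rewrite a_S. unfold Wm, listing_mass. rewrite Hj. ring. }
    rewrite Hwy. rewrite <- Rabs_Ropp. right. f_equal. ring. }
  assert (H2 : lsum (fun j => Rabs (hh (S j) - hh j)) Lj <= psum (fun j => Rabs (hh (S j) - hh j)) J).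
  { rewrite psum_seq. apply lsum_incl; auto; [intros; apply Rabs_pos|].
    intros j Hj. apply in_seq. specialize (HM j Hj). unfold J; lia. }
  pose proof (err_J g J).
  assert (a J0 <= a J) by (apply a_mono; unfold J; lia).
  lra.
Qed.
End PerX.

Lemma sum2R_bound f B : (forall N, 0 <= psum (fun a => psum (f a) N) N <= B) -> 0 <= sum2R f <= B.
Proof.
  intros H. unfold sum2R.
  set (E := fun s => exists N, s = psum (fun a => psum (f a) N) N).
  assert (Hl : is_lub E (epsilon (inhabits 0) (fun l => is_lub E l))).
  { apply (lub_spec E B); [exists (psum (fun a => psum (f a) 0) 0); unfold E; eauto|].
    intros x [N ->]; apply H. }
  destruct Hl as [Hu Hl]. split.
  - apply Rle_trans with (psum (fun a => psum (f a) 0) 0); [simpl; lra| apply Hu; unfold E; eauto].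
  - apply Hl. intros x [N ->]; apply H.
Qed.

Definition eZn (PZgX : nat -> nat -> nat -> R) n x : nat -> option nat :=
  epsilon (inhabits (fun _ : nat => @None nat)) (sorted_listing (PZgX n x)).

Lemma eZn_spec (P : nat -> nat -> nat -> R) n x : is_pmf (P n x) -> sorted_listing (P n x) (eZn P n x).
Proof. intros H. unfold eZn. apply epsilon_spec. apply listing_exists; auto. Qed.

Lemma psum_abs_scal (c : R) (f : nat -> R) N : 0 <= c ->
  psum (fun y => Rabs (c * f y)) N = c * psum (fun y => Rabs (f y)) N.
Proof.
  intros Hc. rewrite <- psum_scal. rewrite !psum_seq. apply lsum_ext. intros.
  rewrite Rabs_mult, Rabs_right by lra. auto.
Qed.

Lemma psum_ext_helper (f g : nat -> R) N : (forall i, f i = g i) -> psum f N = psum g N.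
Proof. intros H. induction N; simpl; auto. rewrite IHN, H; auto. Qed.

Theorem theorem4
  (PX : nat -> nat -> R)            (* P_{X_n}(x) *)
  (PZgX : nat -> nat -> nat -> R)   (* P_{Z_n|X_n}(z|x) *)
  (W : nat -> nat -> nat -> R)      (* W_{Y_n|X_n}(y|x) *)
  (hPX : forall n, is_pmf (PX n))
  (hPZ : forall n x, is_pmf (PZgX n x))
  (hW : forall n x, is_pmf (W n x))
  (hyp : forall gamma : R,
     Un_cv (fun n =>
       sumR (fun x => PX n x *
         leb_measure (fun d => 0 <= d < 1 /\
           cfun (PZgX n x) d - cfun (W n x) d < gamma)))
       0) :
  approximating_source PX PZgX W.
Proof.
  exists (fun n x z => phi (PZgX n x) (W n x) (eZn PZgX n x) (eZn W n x) z).
  assert (Hkey : forall n g, 0 <= var_dist (fun x y => PX n x * W n x y)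
     (fun x y => PX n x * sumR (fun z => if Nat.eqb (phi (PZgX n x) (W n x) (eZn PZgX n x) (eZn W n x) z) y then PZgX n x z else 0))
     <= 2 * exp (- g) + 2 * sumR (fun x => PX n x * leb_measure (fun d => 0 <= d < 1 /\ cfun (PZgX n x) d - cfun (W n x) d < g))).
  { intros n g. unfold var_dist. apply sum2R_bound. intros N.
    set (mu := fun x => leb_measure (fun d => 0 <= d < 1 /\ cfun (PZgX n x) d - cfun (W n x) d < g)).
    assert (Hmu : forall x, 0 <= mu x <= 1).
    { intros x; split; [apply leb_measure_nonneg| apply leb_measure_le1]; intros t [Ht _]; auto. }
    assert (HPX : forall x, 0 <= PX n x) by apply hPX.
    assert (Hrow : forall x, psum (fun y => Rabs (PX n x * W n x y - PX n x *
         sumR (fun z => if Nat.eqb (phi (PZgX n x) (W n x) (eZn PZgX n x) (eZn W n x) z) y then PZgX n x z else 0))) N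
         <= PX n x * (2 * exp (- g) + 2 * mu x)).
    { intros x.
      rewrite (psum_ext_helper _ (fun y => Rabs (PX n x * (W n x y - Qy (PZgX n x) (W n x) (eZn PZgX n x) (eZn W n x) y)))).
      2:{ intros y. unfold Qy. f_equal. ring. }
      rewrite psum_abs_scal by auto. apply Rmult_le_compat_l; auto.
      rewrite psum_seq. apply per_x_bound; auto; apply eZn_spec; auto. }
    split.
    - apply psum_nonneg. intros x. apply psum_nonneg. intros; apply Rabs_pos.
    - apply Rle_trans with (psum (fun x => PX n x * (2 * exp (- g) + 2 * mu x)) N).
      + rewrite !psum_seq. apply lsum_le. intros x _. apply Hrow.
      + rewrite (psum_ext_helper _ (fun x => 2 * exp (- g) * PX n x + 2 * (PX n x * mu x))) by (intros; ring).
        rewrite psum_plus, !psum_scal.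
        pose proof (pmf_psum_le (PX n) N (hPX n)).
        assert (psum (fun x => PX n x * mu x) N <= sumR (fun x => PX n x * mu x)).
        { apply (sumR_ge _ 1). intros M. apply Rle_trans with (psum (PX n) M); [|apply pmf_psum_le; auto].
          rewrite !psum_seq. apply lsum_le. intros x _. specialize (Hmu x). specialize (HPX x). nra. }
        pose proof (exp_pos (- g)). unfold mu in *. nra. }
  intros eps He.
  set (g := - ln (eps / 8)).
  assert (Hg : exp (- g) = eps / 8) by (unfold g; rewrite Ropp_involutive, exp_ln; lra).
  destruct (hyp g (eps / 8) ltac:(lra)) as [N HN]. exists N. intros n Hn.
  specialize (HN n Hn). specialize (Hkey n g). unfold Rdist in *. rewrite Rminus_0_r in *.
  rewrite Rabs_right by lra. apply Rabs_def2 in HN. lra.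
Qed.
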